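(* Assume the standing assumptions (A1)–(A3). Let \[ v^*_{IA}:=\min_{x,\lambda,Y}\ c^Tx+\lambda\ \ \text{s.t.}\ \ x\in\mathcal X,\ \ \lambda g_1g_1^T-\tfrac12G(x)+\tfrac12H(Y)\in\mathrm{IA}(\widehat{\mathcal U}\times\mathbb R^m_+), \] with $\lambda\in\mathbb R$, $Y\in\mathbb R^{n_2\times k}$. Then $v^*_{IA}=v^*_{Aff}$.
   Context: Data: $A\in\mathbb R^{m\times n_1}$, $B\in\mathbb R^{m\times n_2}$, $c\in\mathbb R^{n_1}$, $d\in\mathbb R^{n_2}$, $F\in\mathbb R^{m\times k}$, $\mathcal X\subseteq\mathbb R^{n_1}$ closed convex. $\widehat{\mathcal U}\subseteq\mathbb R_+\times\mathbb R^{k-1}$ closed, convex, full-dimensional cone, dual cone $\widehat{\mathcal U}^*$; $\mathcal U:=\{u\in\widehat{\mathcal U}:u_1=1\}$ nonempty compact. $e_1\in\mathbb R^k$ first basis vector, $g_1=(e_1;0)\in\mathbb R^{k+m}$. (RLP): $v^*_{RLP}:=\inf\{c^Tx+\sup_{u\in\mathcal U}d^Ty(u)\}$ over $x\in\mathcal X$, $y:\mathcal U\to\mathbb R^{n_2}$ with $Ax+By(u)\ge Fu\ \forall u\in\mathcal U$. (A1) $\mathcal X,\widehat{\mathcal U}$ tractable; (A2) (RLP) feasible; (A3) $v^*_{RLP}$ finite. $v^*_{Aff}:=\inf\{c^Tx+\sup_{u\in\mathcal U}d^TYu\}$ over $x\in\mathcal X$, $Y\in\mathbb R^{n_2\times k}$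 with $Ax+BYu\ge Fu\ \forall u\in\mathcal U$. $G(x):=\begin{pmatrix}0&(F-Axe_1^T)^T\\ F-Axe_1^T&0\end{pmatrix}$, $H(Y):=\begin{pmatrix}-e_1d^TY-Y^Tde_1^T&(BY)^T\\ BY&0\end{pmatrix}$. $\mathrm{IA}(\widehat{\mathcal U}\times\mathbb R^m_+):=\{S=\begin{pmatrix}S_{11}&S_{21}^T\\S_{21}&S_{22}\end{pmatrix}\in\mathcal S^{k+m}: S_{11}=e_1\alpha^T+\alpha e_1^T,\ \alpha\in\widehat{\mathcal U}^*,\ \text{each row of }S_{21}\text{ in }\widehat{\mathcal U}^*,\ S_{22}\ge0\text{ entrywise}\}$. *)

(* Defs.v *)
From Stdlib Require Import Reals.
From mathcomp Require Import all_boot.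
Set Implicit Arguments. Unset Strict Implicit. Unset Printing Implicit Defensive.
Local Open Scope R_scope.

Definition vec (n : nat) := 'I_n -> R.
Definition mat (m n : nat) := 'I_m -> 'I_n -> R.

Definition dot (n : nat) (u v : vec n) : R := \big[Rplus/R0]_(i < n) (u i * v i).
Definition mulmv (m n : nat) (A : mat m n) (x : vec n) : vec m :=
  fun r => \big[Rplus/R0]_(j < n) (A r j * x j).
Definition mulmm (m n p : nat) (A : mat m n) (Y : mat n p) : mat m p :=
  fun r j => \big[Rplus/R0]_(l < n) (A r l * Y l j).

(* first standard basis vector e_1 (index 0) and first coordinate u_1 *)
Definition e1 (k : nat) : vec k := fun i => if nat_of_ord i == 0%N then 1 else 0.
Arguments e1 : clear implicits.
Definition coord1 (k : nat) (u : vec k) : R := dot (e1 k) u.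

Definition closedR (n : nat) (S : vec n -> Prop) : Prop :=
  forall (u : nat -> vec n) (v : vec n),
    (forall p, S (u p)) -> (forall i, Un_cv (fun p => u p i) (v i)) -> S v.
Definition boundedR (n : nat) (S : vec n -> Prop) : Prop :=
  exists M, forall u, S u -> forall i, Rabs (u i) <= M.
Definition compactR (n : nat) (S : vec n -> Prop) : Prop :=
  closedR S /\ boundedR S.
Definition convexR (n : nat) (S : vec n -> Prop) : Prop :=
  forall u v t, S u -> S v -> 0 <= t <= 1 -> S (fun i => t * u i + (1 - t) * v i).
Definition is_cone (n : nat) (S : vec n -> Prop) : Prop :=
  forall u t, S u -> 0 <= t -> S (fun i => t * u i).
Definition full_dim (n : nat) (S : vec n -> Prop) : Prop :=
  exists u0 eps, 0 < eps /\ forall v, (forall i, Rabs (v i - u0 i) < eps) -> S v.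
Definition dual_cone (n : nat) (S : vec n -> Prop) : vec n -> Prop :=
  fun w => forall u, S u -> 0 <= dot w u.

Definition Ucal (k : nat) (Uh : vec k -> Prop) : vec k -> Prop :=
  fun u => Uh u /\ coord1 u = 1.

Definition blk (k m : nat) (P : mat k k) (Q : mat k m) (Rm : mat m k) (S : mat m m)
  : mat (k + m) (k + m) :=
  fun i j => match split i, split j with
             | inl a, inl b => P a b
             | inl a, inr b => Q a b
             | inr a, inl b => Rm a b
             | inr a, inr b => S a b
             end.

Definition transp (m n : nat) (A : mat m n) : mat n m := fun j i => A i j.

Definition g1 (k m : nat) : vec (k + m) :=
  fun i => match split i with inl a => e1 k a | inr _ => 0 end.
Arguments g1 : clear implicits.

Definition FAx (m n1 k : nat) (A : mat m n1) (F : mat m k) (x : vec n1) : mat m k :=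
  fun r j => F r j - mulmv A x r * e1 k j.

Definition Gmat (m n1 k : nat) (A : mat m n1) (F : mat m k) (x : vec n1)
  : mat (k + m) (k + m) :=
  blk (fun _ _ => 0) (transp (FAx A F x)) (FAx A F x) (fun _ _ => 0).

Definition dTY (n2 k : nat) (d : vec n2) (Y : mat n2 k) : vec k :=
  fun j => \big[Rplus/R0]_(l < n2) (d l * Y l j).

Definition Hmat (m n2 k : nat) (B : mat m n2) (d : vec n2) (Y : mat n2 k)
  : mat (k + m) (k + m) :=
  blk (fun i j => - (e1 k i * dTY d Y j) - dTY d Y i * e1 k j)
      (transp (mulmm B Y)) (mulmm B Y) (fun _ _ => 0).

Definition IAmat (m n1 n2 k : nat) (A : mat m n1) (B : mat m n2) (d : vec n2)
  (F : mat m k) (x : vec n1) (lam : R) (Y : mat n2 k) : mat (k + m) (k + m) :=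
  fun i j => lam * (g1 k m i * g1 k m j) - / 2 * Gmat A F x i j + / 2 * Hmat B d Y i j.

Definition symmetric (n : nat) (S : mat n n) : Prop := forall i j, S i j = S j i.

Definition IA (k m : nat) (Uh : vec k -> Prop) (S : mat (k + m) (k + m)) : Prop :=
  symmetric S /\
  (exists alpha : vec k, dual_cone Uh alpha /\
     forall i j : 'I_k, S (lshift m i) (lshift m j) = e1 k i * alpha j + alpha i * e1 k j) /\
  (forall r : 'I_m, dual_cone Uh (fun j => S (rshift k r) (lshift m j))) /\
  (forall r s : 'I_m, 0 <= S (rshift k r) (rshift k s)).

(* (RLP): feasibility and the set of attainable objective levels
   (t is attainable iff some feasible (x,y) has c^T x + sup_u d^T y(u) <= t) *)
Definition RLP_feasible (m n1 n2 k : nat) (A : mat m n1) (B : mat m n2) (F : mat m k)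
  (X : vec n1 -> Prop) (Uh : vec k -> Prop) (x : vec n1) (y : vec k -> vec n2) : Prop :=
  X x /\ forall u, Ucal Uh u -> forall r, mulmv F u r <= mulmv A x r + mulmv B (y u) r.

Definition RLP_level (m n1 n2 k : nat) (A : mat m n1) (B : mat m n2) (c : vec n1)
  (d : vec n2) (F : mat m k) (X : vec n1 -> Prop) (Uh : vec k -> Prop) (t : R) : Prop :=
  exists x y, RLP_feasible A B F X Uh x y /\
    forall u, Ucal Uh u -> dot c x + dot d (y u) <= t.

(* v*_RLP finite: attainable levels nonempty (inf < +oo) and bounded below (inf > -oo) *)
Definition RLP_finite (m n1 n2 k : nat) (A : mat m n1) (B : mat m n2) (c : vec n1)
  (d : vec n2) (F : mat m k) (X : vec n1 -> Prop) (Uh : vec k -> Prop) : Prop :=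
  (exists t, RLP_level A B c d F X Uh t) /\
  (exists L, forall t, RLP_level A B c d F X Uh t -> L <= t).

Definition Aff_level (m n1 n2 k : nat) (A : mat m n1) (B : mat m n2) (c : vec n1)
  (d : vec n2) (F : mat m k) (X : vec n1 -> Prop) (Uh : vec k -> Prop) (t : R) : Prop :=
  exists (x : vec n1) (Y : mat n2 k), X x /\
    (forall u, Ucal Uh u -> forall r,
        mulmv F u r <= mulmv A x r + mulmv B (mulmv Y u) r) /\
    (forall u, Ucal Uh u -> dot c x + dot d (mulmv Y u) <= t).

Definition IA_value (m n1 n2 k : nat) (A : mat m n1) (B : mat m n2) (c : vec n1)
  (d : vec n2) (F : mat m k) (X : vec n1 -> Prop) (Uh : vec k -> Prop) (t : R) : Prop :=
  exists (x : vec n1) (lam : R) (Y : mat n2 k),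
    X x /\ IA Uh (IAmat A B d F x lam Y) /\ t = dot c x + lam.

(* Main.v *)
Require Import Defs.
From Stdlib Require Import Reals.
From mathcomp Require Import all_boot.
From Stdlib Require Import Lra Psatz FunctionalExtensionality.
From HB Require Import structures.
Local Open Scope R_scope.

HB.instance Definition _ := Monoid.isComLaw.Build R R0 Rplus
  (fun x y z => esym (Rplus_assoc x y z)) Rplus_comm Rplus_0_l.

Lemma sumD (n : nat) (F G : 'I_n -> R) :
  \big[Rplus/R0]_(i < n) (F i + G i) =
  \big[Rplus/R0]_(i < n) F i + \big[Rplus/R0]_(i < n) G i.
Proof. exact: big_split. Qed.

Lemma sumZ (n : nat) (a : R) (F : 'I_n -> R) :
  \big[Rplus/R0]_(i < n) (a * F i) = a * \big[Rplus/R0]_(i < n) F i.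
Proof.
elim: n F => [|n IH] F; first by rewrite !big_ord0 Rmult_0_r.
by rewrite !big_ord_recr /= IH Rmult_plus_distr_l.
Qed.

Lemma sumX (n p : nat) (F : 'I_n -> 'I_p -> R) :
  \big[Rplus/R0]_(i < n) \big[Rplus/R0]_(j < p) F i j =
  \big[Rplus/R0]_(j < p) \big[Rplus/R0]_(i < n) F i j.
Proof.
elim: n F => [|n IH] F.
  rewrite big_ord0. elim: p F => [|p IHp] F; first by rewrite big_ord0.
  rewrite big_ord_recr /= -IHp big_ord0; ring.
rewrite big_ord_recr /= IH -sumD.
apply: eq_bigr => j _; by rewrite big_ord_recr.
Qed.

Lemma sum_lin2 (n : nat) (a b : R) (F G : 'I_n -> R) :
  \big[Rplus/R0]_(i < n) (a * F i + b * G i) =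
  a * \big[Rplus/R0]_(i < n) F i + b * \big[Rplus/R0]_(i < n) G i.
Proof. by rewrite sumD !sumZ. Qed.

Lemma sum_lin3 (n : nat) (a b c : R) (F G H : 'I_n -> R) :
  \big[Rplus/R0]_(i < n) (a * F i + b * G i + c * H i) =
  a * \big[Rplus/R0]_(i < n) F i + b * \big[Rplus/R0]_(i < n) G i
  + c * \big[Rplus/R0]_(i < n) H i.
Proof. by rewrite !sumD !sumZ. Qed.

Lemma LX (n k : nat) (p : vec n) (Q : mat n k) (u : vec k) :
  \big[Rplus/R0]_(j < k) (\big[Rplus/R0]_(l < n) (p l * Q l j) * u j) =
  \big[Rplus/R0]_(l < n) (p l * \big[Rplus/R0]_(j < k) (Q l j * u j)).
Proof.
rewrite (eq_bigr (fun j => \big[Rplus/R0]_(l < n) (u j * (p l * Q l j)))).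
  rewrite -sumX; apply: eq_bigr => l _.
  rewrite -sumZ; apply: eq_bigr => j _; ring.
move=> j _; rewrite Rmult_comm sumZ //.
Qed.

Lemma dot_scale (k : nat) (w u : vec k) (t : R) :
  dot w (fun i => t * u i) = t * dot w u.
Proof. rewrite /dot -sumZ; apply: eq_bigr => i _; ring. Qed.

Lemma dot_add2 (k : nat) (w u v : vec k) (a b : R) :
  dot w (fun i => a * u i + b * v i) = a * dot w u + b * dot w v.
Proof.
rewrite /dot -sum_lin2; apply: eq_bigr => i _; ring.
Qed.

Lemma hom (k : nat) (Uh : vec k -> Prop) (w : vec k)
  (HUv : convexR Uh) (HUk : is_cone Uh) (HUpos : forall u, Uh u -> 0 <= coord1 u)
  (HUne : exists u, Ucal Uh u) :
  (forall u, Ucal Uh u -> 0 <= dot w u) -> forall u, Uh u -> 0 <= dot w u.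
Proof.
move=> H.
have Hpos : forall u, Uh u -> 0 < coord1 u -> 0 <= dot w u.
  move=> u Hu Hc.
  have Hv : Ucal Uh (fun i => / coord1 u * u i).
    split; first by apply: HUk => //; left; apply: Rinv_0_lt_compat.
    rewrite /coord1 dot_scale -/(coord1 u); field; lra.
  have := H _ Hv; rewrite dot_scale => H2.
  have Hi : 0 < / coord1 u by apply: Rinv_0_lt_compat.
  nra.
move=> u Hu.
case: (HUpos u Hu) => Hc; first by apply: Hpos.
case: HUne => u0 [Hu0 Hc0].
have Hsum : forall e, 0 < e -> 0 <= dot w u + e * dot w u0.
  move=> e He.
  have Hv : Uh (fun i => 1 * u i + e * u0 i).
    have H1 := HUk u 2 Hu ltac:(lra).
    have H2 := HUk u0 (2 * e) Hu0 ltac:(lra).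
    have := HUv _ _ (/2) H1 H2 ltac:(lra).
    have -> : (fun i => / 2 * (2 * u i) + (1 - / 2) * (2 * e * u0 i))
           = (fun i => 1 * u i + e * u0 i).
      by apply: functional_extensionality => i; field.
    done.
  have := Hpos _ Hv; rewrite dot_add2.
  have -> : coord1 (fun i => 1 * u i + e * u0 i) = 1 * coord1 u + e * coord1 u0
    by rewrite /coord1 dot_add2.
  rewrite -Hc Hc0 => H3; have := H3 ltac:(lra); lra.
case: (Rle_lt_dec 0 (dot w u)) => // Hneg.
set a := dot w u in Hsum Hneg.
set b := dot w u0 in Hsum.
have He : 0 < - a / (2 * (Rabs b + 1)).
  apply: Rdiv_lt_0_compat; first lra.
  have := Rabs_pos b; lra.
have := Hsum _ He.
have Hpr : (- a / (2 * (Rabs b + 1))) * b <= (- a / (2 * (Rabs b + 1))) * Rabs b.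
  apply: Rmult_le_compat_l; [lra | apply: Rle_abs].
have Hq : (- a / (2 * (Rabs b + 1))) * Rabs b <= - a / 2.
  have Hab := Rabs_pos b.
  rewrite /Rdiv.
  have -> : - a * / (2 * (Rabs b + 1)) * Rabs b = (- a) * (Rabs b / (2 * (Rabs b + 1))) by field; lra.
  have : Rabs b / (2 * (Rabs b + 1)) <= / 2.
    apply: (Rmult_le_reg_r (2 * (Rabs b + 1))); first lra.
    field_simplify; lra.
  set q := Rabs b / (2 * (Rabs b + 1)) => Hq1.
  have : 0 <= (- a) * (/2 - q) by apply: Rmult_le_pos; lra.
  lra.
lra.
Qed.

Lemma split_l (k m : nat) (i : 'I_k) : split (lshift m i) = inl i.
Proof. exact: (unsplitK (inl i)). Qed.
Lemma split_r (k m : nat) (i : 'I_m) : split (rshift k i) = inr i.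
Proof. exact: (unsplitK (inr i)). Qed.

Section Entries.
Variables (m n1 n2 k : nat) (A : mat m n1) (B : mat m n2) (d : vec n2)
  (F : mat m k) (x : vec n1) (lam : R) (Y : mat n2 k).

Lemma ent_ll (i j : 'I_k) :
  IAmat A B d F x lam Y (lshift m i) (lshift m j) =
  lam * (e1 k i * e1 k j) + / 2 * (- (e1 k i * dTY d Y j) - dTY d Y i * e1 k j).
Proof.
rewrite /IAmat /Gmat /Hmat /blk /g1 !split_l; ring.
Qed.

Lemma ent_rl (r : 'I_m) (j : 'I_k) :
  IAmat A B d F x lam Y (rshift k r) (lshift m j) =
  / 2 * (mulmv A x r * e1 k j + mulmm B Y r j - F r j).
Proof.
rewrite /IAmat /Gmat /Hmat /blk /g1 split_l split_r /FAx; ring.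
Qed.

Lemma ent_rr (r s : 'I_m) :
  IAmat A B d F x lam Y (rshift k r) (rshift k s) = 0.
Proof.
rewrite /IAmat /Gmat /Hmat /blk /g1 !split_r; ring.
Qed.

Lemma IAmat_sym : Defs.symmetric (IAmat A B d F x lam Y).
Proof.
move=> i j; rewrite /IAmat /Gmat /Hmat /blk /g1 /transp.
case: (split i) => a; case: (split j) => b; ring.
Qed.

Lemma dot_row (r : 'I_m) (u : vec k) :
  dot (fun j => IAmat A B d F x lam Y (rshift k r) (lshift m j)) u =
  / 2 * (mulmv A x r * coord1 u + mulmv B (mulmv Y u) r - mulmv F u r).
Proof.
rewrite /dot.
rewrite (eq_bigr (fun j => (/2 * mulmv A x r) * (e1 k j * u j) + (/2) * (mulmm B Y r j * u j)
   + (- / 2) * (F r j * u j))); last by move=> j _; rewrite ent_rl; ring.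
rewrite sum_lin3.
have -> : \big[Rplus/R0]_(i < k) (mulmm B Y r i * u i) = mulmv B (mulmv Y u) r.
  by rewrite /mulmm /mulmv LX.
rewrite /coord1 /dot /mulmv; ring.
Qed.

Lemma dot_dY (u : vec k) : dot d (mulmv Y u) = dot (dTY d Y) u.
Proof. by rewrite /dot /dTY /mulmv LX. Qed.

End Entries.

Theorem theorem2 (m n1 n2 k : nat) (A : mat m n1) (B : mat m n2) (c : vec n1)
  (d : vec n2) (F : mat m k) (X : vec n1 -> Prop) (Uh : vec k -> Prop)
  (HXc : closedR X) (HXv : convexR X)
  (HUc : closedR Uh) (HUv : convexR Uh) (HUk : is_cone Uh) (HUf : full_dim Uh)
  (HUpos : forall u, Uh u -> 0 <= coord1 u)
  (HUne : exists u, Ucal Uh u) (HUcpt : compactR (Ucal Uh))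
  (HA2 : exists x y, RLP_feasible A B F X Uh x y)
  (HA3 : RLP_finite A B c d F X Uh) :
  forall r : R,
    (forall t, IA_value A B c d F X Uh t -> r <= t) <->
    (forall t, Aff_level A B c d F X Uh t -> r <= t).
Proof.
move=> r; split.
- move=> H1 t [x [Y [Xx [Hfeas Hobj]]]].
  apply: H1; exists x, (t - dot c x), Y; split => //; split; last ring.
  set lam := t - dot c x.
  split; first exact: IAmat_sym.
  split.
    exists (fun j => lam / 2 * e1 k j - / 2 * dTY d Y j); split.
      apply: hom => // u [Hu Hc].
      have -> : dot (fun j => lam / 2 * e1 k j - / 2 * dTY d Y j) u
             = lam / 2 * coord1 u + (- / 2) * dot (dTY d Y) u.
        rewrite /coord1 /dot -sum_lin2; apply: eq_bigr => i _; ring.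
      have := Hobj u (conj Hu Hc); rewrite dot_dY Hc /lam => H; lra.
    move=> i j; rewrite ent_ll. move: (e1 k i) (e1 k j) (dTY d Y i) (dTY d Y j) => a0 b0 c0 e0; field.
  split.
    move=> r0; apply: hom => // u [Hu Hc].
    rewrite dot_row Hc; have := Hfeas u (conj Hu Hc) r0; lra.
  move=> r0 s; rewrite ent_rr; lra.
- move=> H2 t [x [lam [Y [Xx [[Hsym [[al [Hal Heq]] [Hrow Hbot]]] ->]]]]].
  apply: H2; exists x, Y; split => //; split.
    move=> u [Hu Hc] r0.
    have := Hrow r0 u Hu; rewrite dot_row Hc => H; lra.
  move=> u [Hu Hc].
  have [i0 Hi0] : exists i0 : 'I_k, nat_of_ord i0 = 0%N.
    case: (posnP k) => [Hk0|Hk]; last by exists (Ordinal Hk).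
    exfalso; move: Hc; subst k; rewrite /coord1 /dot big_ord0 => H0.
    have : R0 = 0 by []. lra.
  have He0 : e1 k i0 = 1 by rewrite /e1 Hi0.
  have E0 := Heq i0 i0; rewrite ent_ll He0 in E0.
  have Hal0 : al i0 = (lam - dTY d Y i0) / 2 by lra.
  have Hal' : forall j, al j = lam / 2 * e1 k j - / 2 * dTY d Y j.
    move=> j; have Ej := Heq i0 j; rewrite ent_ll He0 Hal0 in Ej; lra.
  have := Hal u Hu.
  have -> : dot al u = lam / 2 * coord1 u + (- / 2) * dot (dTY d Y) u.
    rewrite /coord1 /dot -sum_lin2; apply: eq_bigr => i _; rewrite Hal'; ring.
  rewrite dot_dY Hc => H; lra.
Qed.
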